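(* Let $m\ge1$ and $l\ge1$ be integers. Then $D_{m,l}^{-1}B^*_{k,j}(t)\in\mathbb{Z}[t]$ for all $k,j=0,1,\dots,m$.
   Context: $v_p$ is the $p$-adic valuation. $D_{m,l}=\prod_{p\le (m+1)/2,\ p\text{ prime}}p^{\mu_p v_p((l-1)!)}$ where $\mu_p=\min_{0\le j\le m}\left(\lfloor j/p\rfloor+\lfloor (m-j)/p\rfloor\right)$. For $k=0,\dots,m$ let $l^{(k)}_h=l$ for $h\ne k$ and $l^{(k)}_k=l-1$, and $L=(m+1)l-1$. For $j,k\in\{0,\dots,m\}$ define $\sigma^{(k,j)}_i$ by $\prod_{h=0}^m(h-j-w)^{l^{(k)}_h}=\sum_{i=0}^L\sigma^{(k,j)}_iw^i$, and $B^*_{k,j}(t)=\frac{1}{(l-1)!}\sum_{i=0}^{L}t^{L-i}\,i!\,\sigma^{(k,j)}_i$. *)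

(* Defs.v *)
From HB Require Import structures.
From mathcomp Require Import all_boot all_order all_algebra.
Set Implicit Arguments. Unset Strict Implicit. Unset Printing Implicit Defensive.
Import Order.TTheory GRing.Theory Num.Theory.
Local Open Scope ring_scope.

Definition mu (m p : nat) : nat :=
  \big[minn/(0 %/ p + m %/ p)%N]_(j < m.+1) (j %/ p + (m - j) %/ p)%N.

(* D_{m,l} = prod_{p prime, p <= (m+1)/2} p^(mu_p * v_p((l-1)!)) ;
   p <= (m+1)/2 (real division) is written 2p <= m+1. *)
Definition Dml (m l : nat) : nat :=
  (\prod_(p < m.+2 | prime p && (2 * p <= m.+1)%N) p ^ (mu m p * logn p (l - 1)`!))%N.

Definition lk (l k h : nat) : nat := if h == k then (l - 1)%N else l.

Definition Lml (m l : nat) : nat := ((m.+1) * l - 1)%N.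

Definition sigma_poly (m l k j : nat) : {poly int} :=
  \prod_(h < m.+1) (((h : int) - (j : int))%:P - 'X) ^+ lk l k h.

Definition sigma (m l k j i : nat) : int := (sigma_poly m l k j)`_i.

Definition Bstar (m l k j : nat) : {poly rat} :=
  ((l - 1)`!)%:R^-1 *:
    \sum_(i < (Lml m l).+1) ((i`!)%:R * (sigma m l k j i)%:~R) *: 'X^(Lml m l - i).

(* Main.v *)
Require Import Defs.
From HB Require Import structures.
From mathcomp Require Import all_boot all_order all_algebra ring zify.
Set Implicit Arguments. Unset Strict Implicit. Unset Printing Implicit Defensive.
Import Order.TTheory GRing.Theory Num.Theory.
Lemma logn_fact_le p n : prime p -> logn p n`! <= n.
Proof.
move=> pp; rewrite logn_fact //.
have p2 : 1 < p by apply: prime_gt1.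
suff H : forall K, \sum_(1 <= k < K.+1) n %/ p ^ k + n %/ p ^ K <= n.
  exact: leq_trans (leq_addr _ _) (H n).
elim=> [|K IH]; first by rewrite big_geq // expn0 divn1.
rewrite big_nat_recr //= expnSr divnMA.
set a := n %/ p ^ K.
have h2 : a %/ p + a %/ p <= a.
  apply: leq_trans (leq_trunc_div a p).
  rewrite addnn -muln2 leq_mul2l; apply/orP; right; exact: p2.
by rewrite -addnA (leq_trans _ IH) // leq_add2l.
Qed.

Local Open Scope ring_scope.

Definition good (p e : nat) (f : {poly int}) :=
  forall i : nat, ((p ^ e)%N%:Z %| (i`!)%:Z * f`_i)%Z.

Lemma good0 p f : good p 0 f.
Proof. by move=> i; rewrite expn0 dvd1z. Qed.

Lemma good_mono p e e' f : (e' <= e)%N -> good p e f -> good p e' f.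
Proof.
move=> lee H i; apply: dvdz_trans (H i).
by rewrite dvdzE /= dvdn_exp2l.
Qed.

Lemma good_add p e f g : good p e f -> good p e g -> good p e (f + g).
Proof. by move=> Hf Hg i; rewrite coefD mulrDr rpredD. Qed.

Lemma good_zero p e : good p e 0.
Proof. by move=> i; rewrite coef0 mulr0 dvdz0. Qed.

Lemma good_sum p e (I : Type) (r : seq I) (P : pred I) (F : I -> {poly int}) :
  (forall i, P i -> good p e (F i)) -> good p e (\sum_(i <- r | P i) F i).
Proof.
move=> H; elim/big_ind: _ => //; [exact: good_zero| exact: good_add].
Qed.

Lemma good_mul p e1 e2 f g : good p e1 f -> good p e2 g -> good p (e1 + e2) (f * g).
Proof.
move=> Hf Hg n; rewrite coefM mulr_sumr; apply: rpred_sum => r _.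
have lrn : (r <= n)%N by rewrite -ltnS ltn_ord.
rewrite -(bin_fact lrn) expnD PoszM.
have -> : (('C(n, r) * (r`! * (n - r)`!))%N%:Z * (f`_r * g`_(n - r)))
   = ('C(n, r))%:Z * (((r`!)%:Z * f`_r) * (((n - r)`!)%:Z * g`_(n - r))).
  by rewrite !PoszM; ring.
by apply: dvdz_mull; rewrite PoszM; apply: dvdz_mul.
Qed.

Lemma good_prod p (I : Type) (r : seq I) (P : pred I) (E : I -> nat) (F : I -> {poly int}) :
  (forall i, P i -> good p (E i) (F i)) ->
  good p (\sum_(i <- r | P i) E i)%N (\prod_(i <- r | P i) F i).
Proof.
move=> H; apply: (big_ind2 (fun e f => good p e f)) => //.
- by move=> ? ? ? ?; apply: good_mul.
Qed.

Lemma good_mono_term p e a i : ((p ^ e)%N%:Z %| (i`!)%:Z * a)%Z -> good p e (a%:P * 'X^i).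
Proof.
move=> H n; rewrite coefCM coefXn; case: eqP => [->|_]; first by rewrite mulr1.
by rewrite !mulr0 dvdz0.
Qed.

Lemma PXz (a b : nat) : (a ^ b)%N%:Z = (a%:Z) ^+ b.
Proof. by rewrite -!natz natrX. Qed.

Lemma key_nat p e i : prime p -> (i <= e)%N ->
  (p ^ logn p e`! %| e ^_ i * p ^ (e - i))%N.
Proof.
move=> pp lie.
rewrite pfactor_dvdn //; last by rewrite muln_gt0 ffact_gt0 lie expn_gt0 prime_gt0.
rewrite -(ffact_fact lie) lognM ?ffact_gt0 ?fact_gt0 // lognM ?ffact_gt0 ?expn_gt0 ?prime_gt0 //.
by rewrite pfactorK // leq_add2l logn_fact_le.
Qed.

Lemma good_factor p (c : int) e : prime p -> ((p : int) %| c)%Z ->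
  good p (logn p e`!) ((c%:P - 'X) ^+ e).
Proof.
move=> pp /dvdzP [c' ->].
rewrite exprDn; apply: good_sum => i _.
have -> : (c' * p)%:P ^+ (e - i) * (- 'X) ^+ i *+ 'C(e, i)
   = (((c' * p) ^+ (e - i) * (-1) ^+ i) *+ 'C(e, i))%:P * 'X^i.
  rewrite polyCMn mulrnAl; congr (_ *+ _).
  by rewrite [in RHS]polyCM !polyC_exp polyCM polyCN polyC1 exprNn; ring.
apply: good_mono_term.
have lie : (i <= e)%N by rewrite -ltnS ltn_ord.
have -> : (i`!)%:Z * ((c' * p) ^+ (e - i) * (-1) ^+ i *+ 'C(e, i))
   = ((e ^_ i * p ^ (e - i))%N%:Z * c' ^+ (e - i)) * (-1) ^+ i.
  have PX : forall a b : nat, (a ^ b)%N%:Z = (a%:Z) ^+ b.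
    by move=> a b; rewrite -!natz natrX.
  by rewrite -bin_ffact -mulr_natr !PoszM PX natz exprMn; ring.
by apply: dvdz_mulr; apply: dvdz_mulr; rewrite dvdzE /= key_nat.
Qed.

Lemma cnt1 p n : (0 < p)%N -> (\sum_(0 <= h < n) (p %| h.+1 : nat))%N = (n %/ p)%N.
Proof.
move=> p0; elim: n => [|n IH]; first by rewrite big_geq // div0n.
by rewrite big_nat_recr //= IH divnS // addnC.
Qed.

Lemma count_mult p j m : (0 < p)%N -> (j <= m)%N ->
  (\sum_(h < m.+1) (dvdz (p : int) ((h : int) - (j : int))%R : nat))%N
  = (1 + (j %/ p) + ((m - j) %/ p))%N.
Proof.
move=> p0 hj.
rewrite -(big_mkord xpredT (fun h : nat => (dvdz (p : int) ((h : int) - (j : int))%R : nat))).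
rewrite (@big_cat_nat _ _ _ j) /=; [|by []|by apply: leqW].
rewrite big_nat_rev /= add0n.
rewrite (eq_big_nat _ _ (F2 := fun h => (p %| h.+1 : nat))); last first.
  move=> h /andP [_ hh].
  by rewrite -subzn // addrAC subrr add0r /dvdz abszN.
rewrite cnt1 // -{2}(add0n j) big_addn subSn //.
rewrite big_nat_recl // (eq_big_nat _ _ (F2 := fun h => (p %| h.+1 : nat))); last first.
  by move=> h _; rewrite PoszD addrK.
rewrite cnt1 // add0n subrr /dvdz dvdn0 /=; lia.
Qed.

Lemma logn_prod0 p (I : Type) (r : seq I) (P : pred I) (g F : I -> nat) :
  (forall i, P i -> prime (g i) /\ g i <> p) ->
  (0 < \prod_(i <- r | P i) g i ^ F i)%N /\ logn p (\prod_(i <- r | P i) g i ^ F i) = 0%N.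
Proof.
move=> H; apply: (big_ind (fun x => (0 < x)%N /\ logn p x = 0%N)); first by rewrite logn1.
- by move=> x y [x0 lx] [y0 ly]; rewrite muln_gt0 x0 y0 lognM // lx ly.
- move=> i /H [pg gp]; split; first by rewrite expn_gt0 prime_gt0.
  rewrite lognX logn_prime //; case: eqP => [e|_]; last by rewrite muln0.
  by case: gp.
Qed.

Lemma logn_D m l p : prime p -> (logn p (Dml m l) <= mu m p * logn p (l - 1)`!)%N.
Proof.
move=> pp; rewrite /Dml.
case hp : ((p < m.+2)%N && (2 * p <= m.+1)%N).
  move/andP: hp => [hp1 hp2].
  rewrite (bigD1 (Ordinal hp1)) /=; last by rewrite pp hp2.
  have prem : forall i : 'I_m.+2, ((prime i && (2 * i <= m.+1)%N) && (i != Ordinal hp1)) ->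
      prime i /\ (i : nat) <> p.
    move=> i /andP [/andP [pi _] ni]; split => // eip; move: ni.
    by apply/negP; rewrite negbK; apply/eqP; apply: val_inj.
  have [h0 h1] := @logn_prod0 p _ (index_enum _) _ (fun i : 'I_m.+2 => (i : nat))
     (fun i : 'I_m.+2 => (mu m i * logn i (l - 1)`!)%N) prem.
  rewrite lognM; [|by rewrite expn_gt0 prime_gt0|exact: h0].
  rewrite pfactorK //.
  by rewrite [X in (_ + X <= _)%N](_ : _ = 0%N) ?addn0 //; exact: h1.
have prem : forall i : 'I_m.+2, (prime i && (2 * i <= m.+1)%N) ->
      prime i /\ (i : nat) <> p.
  move=> i /andP [pi hi]; split => // eip; move: hp.
  by rewrite -eip ltn_ord hi.
have [h0 h1] := @logn_prod0 p _ (index_enum _) _ (fun i : 'I_m.+2 => (i : nat))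
     (fun i : 'I_m.+2 => (mu m i * logn i (l - 1)`!)%N) prem.
by rewrite h1.
Qed.

Lemma bigmin_le (I : eqType) (r : seq I) (x : nat) (F : I -> nat) j :
  j \in r -> (\big[minn/x]_(i <- r) F i <= F j)%N.
Proof.
elim: r => [|a r IH] //; rewrite in_cons big_cons => /orP [/eqP ->|jr].
  exact: geq_minl.
exact: leq_trans (geq_minr _ _) (IH jr).
Qed.

Lemma mu_le m p j : (j <= m)%N -> (mu m p <= j %/ p + (m - j) %/ p)%N.
Proof.
move=> hj; rewrite /mu.
have hj' : (j < m.+1)%N by [].
exact: (bigmin_le _ (fun i : 'I_m.+1 => (i %/ p + (m - i) %/ p)%N) (mem_index_enum (Ordinal hj'))).
Qed.

Lemma main_div m l k j i : (1 <= l)%N -> (j <= m)%N ->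
  (((((l - 1)`! * Dml m l)%N : int)) %| (i`!)%:Z * sigma m l k j i)%Z.
Proof.
move=> hl hj.
have D0 : (0 < Dml m l)%N.
  by rewrite /Dml prodn_cond_gt0 // => q /andP [pq _]; rewrite expn_gt0 prime_gt0.
have N0 : (0 < (l - 1)`! * Dml m l)%N by rewrite muln_gt0 fact_gt0 D0.
rewrite dvdzE /=.
apply/dvdn_partP => // p; rewrite mem_primes => /and3P [pp _ _].
rewrite p_part.
set v := logn p (l - 1)`!.
have G : good p (\sum_(h < m.+1) (if dvdz p ((h : int) - (j : int)) then v else 0%N))%N
           (sigma_poly m l k j).
  apply: good_prod => h _; case: ifP => H; last exact: good0.
  apply: good_mono (good_factor (lk l k h) pp H).
  apply: dvdn_leq_log; first exact: fact_gt0.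
  have hle : (l - 1 <= lk l k h)%N by rewrite /lk; case: ifP => _ //; apply: leq_subr.
  by rewrite (fact_split hle) dvdn_mulr.
move: (G i); rewrite /sigma dvdzE /= => Hi.
apply: dvdn_trans Hi; rewrite dvdn_exp2l //.
rewrite lognM ?fact_gt0 //.
have -> : (\sum_(h < m.+1) (if dvdz p ((h : int) - (j : int)) then v else 0%N))%N
   = (v * \sum_(h < m.+1) (dvdz p ((h : int) - (j : int))%R : nat))%N.
  rewrite big_distrr /=; apply: eq_bigr => h _; case: ifP => _ ; by rewrite ?muln1 ?muln0.
rewrite count_mult ?prime_gt0 //.
have h1 := logn_D m l pp; have h2 := mu_le p hj.
have h3 : (mu m p * v <= (j %/ p + (m - j) %/ p) * v)%N by rewrite leq_mul2r h2 orbT.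
rewrite -/v in h1.
nia.
Qed.

Unset Implicit Arguments.
Set Strict Implicit.

Theorem corollary6p3 (m l : nat) (hm : (1 <= m)%N) (hl : (1 <= l)%N) (k j : nat)
  (hk : (k <= m)%N) (hj : (j <= m)%N) :
  ((Dml m l)%:R^-1 *: Bstar m l k j) \is a polyOver (@Num.int rat).
Proof.
rewrite /Bstar scalerA scaler_sumr; apply/polyOverP => n.
rewrite coef_sum; apply: rpred_sum => i _; rewrite !coefZ coefXn mulrA.
apply: rpredM; last by case: (n == _).
have D0 : (0 < Dml m l)%N.
  by rewrite /Dml prodn_cond_gt0 // => q /andP [pq _]; rewrite expn_gt0 prime_gt0.
have /dvdzP [q Hq] := main_div k i hl hj.
have -> : (i`!)%:R * (sigma m l k j i)%:~R = ((i`!)%:Z * sigma m l k j i)%:~R :> rat.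
  by rewrite intrM.
rewrite Hq intrM PoszM intrM.
have F0 : ((l - 1)`!)%:R != 0 :> rat by rewrite pnatr_eq0 -lt0n fact_gt0.
have D0' : (Dml m l)%:R != 0 :> rat by rewrite pnatr_eq0 -lt0n D0.
have -> : (Dml m l)%:R^-1 * ((l - 1)`!)%:R^-1 *
      (q%:~R * (((l - 1)`!)%:Z%:~R * (Dml m l)%:Z%:~R)) = q%:~R :> rat.
  field. by rewrite F0 D0'.
exact: intr_int.
Qed.
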